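(* For each $X\in\{\mathrm{B_{ii}},\mathrm{B_{vi}},\mathrm{H_{ii}},\mathrm{H_{iii}}\}$, let $G_X$ be the group with generators $a,b,c$ and relations $\mathrm{B_{ii}}$: $ababab=bababa,\ bc=ab,\ ac=ca$; $\mathrm{B_{vi}}$: $aba=bab,\ aca=bac,\ acaca=cacac$; $\mathrm{H_{ii}}$: $abab=baba,\ aca=bac,\ acaca=cacac$; $\mathrm{H_{iii}}$: $aba=bab,\ bcba=cbac,\ cba=acb$; and let $G_X^+$ be the submonoid of $G_X$ generated by $a,b,c$. Then $G_X^+$ is not a Gaussian monoid; hence it is neither an Artin monoid nor a Garside monoid.
   Context: A monoid is Gaussian if it is atomic, cancellative, and admits the (left and right) divisibility theory, i.e. any two elements have a left least common multiple and a right least common multiple with respect to left/right divisibility ($U|_lV$ iff $V=UW$, $U|_rV$ iff $V=WU$ for some $W$). *)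

(* Defs.v *)
From Stdlib Require Import List.
Import ListNotations.

Section Gaussian.
Variables (M : Type) (eqv : M -> M -> Prop) (mul : M -> M -> M) (one : M).

Definition ldiv (U V : M) : Prop := exists W, eqv V (mul U W).
Definition rdiv (U V : M) : Prop := exists W, eqv V (mul W U).

Definition cancellative : Prop :=
  (forall U V W, eqv (mul U V) (mul U W) -> eqv V W) /\
  (forall U V W, eqv (mul V U) (mul W U) -> eqv V W).

Fixpoint prodl (l : list M) : M :=
  match l with [] => one | x :: l' => mul x (prodl l') end.

Definition atomic : Prop :=
  forall x, exists N : nat, forall l : list M,
    Forall (fun y => ~ eqv y one) l -> eqv (prodl l) x -> length l <= N.

Definition is_lcm (div : M -> M -> Prop) (U V L : M) : Prop :=
  div U L /\ div V L /\ forall L', div U L' -> div V L' -> div L L'.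

Definition gaussian : Prop :=
  atomic /\ cancellative /\
  (forall U V, exists L, is_lcm ldiv U V L) /\
  (forall U V, exists L, is_lcm rdiv U V L).

End Gaussian.

Inductive gen := ga | gb | gc.

(* letters of group words: (generator, true) = generator, (generator, false) = inverse *)
Definition letter := (gen * bool)%type.
Definition gword := list letter.

Definition pos (w : list gen) : gword := map (fun g => (g, true)) w.

(* The congruence on group words defining the group <a,b,c | u_i = v_i>
   (positive relators given as pairs of positive words). *)
Inductive geq (R : list (list gen * list gen)) : gword -> gword -> Prop :=
| geq_rel : forall u v, In (u, v) R -> geq R (pos u) (pos v)
| geq_inv1 : forall g b, geq R [(g, b); (g, negb b)] []
| geq_ctx : forall p q u v, geq R u v -> geq R (p ++ u ++ q) (p ++ v ++ q)
| geq_refl : forall u, geq R u u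
| geq_sym : forall u v, geq R u v -> geq R v u
| geq_trans : forall u v w, geq R u v -> geq R v w -> geq R u w.

(* G^+ : the submonoid of the group generated by a, b, c.  Its elements are
   the group elements represented by positive words; equality is equality
   in the group. *)
Definition Gplus_eqv (R : list (list gen * list gen)) (u v : list gen) : Prop :=
  geq R (pos u) (pos v).
Definition Gplus_mul (u v : list gen) : list gen := u ++ v.
Definition Gplus_one : list gen := [].

Definition Gplus_gaussian (R : list (list gen * list gen)) : Prop :=
  gaussian (list gen) (Gplus_eqv R) Gplus_mul Gplus_one.

Inductive case := B_ii | B_vi | H_ii | H_iii.

Definition rels (X : case) : list (list gen * list gen) :=
  match X with
  | B_ii  => [([ga;gb;ga;gb;ga;gb], [gb;ga;gb;ga;gb;ga]);
              ([gb;gc], [ga;gb]);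
              ([ga;gc], [gc;ga])]
  | B_vi  => [([ga;gb;ga], [gb;ga;gb]);
              ([ga;gc;ga], [gb;ga;gc]);
              ([ga;gc;ga;gc;ga], [gc;ga;gc;ga;gc])]
  | H_ii  => [([ga;gb;ga;gb], [gb;ga;gb;ga]);
              ([ga;gc;ga], [gb;ga;gc]);
              ([ga;gc;ga;gc;ga], [gc;ga;gc;ga;gc])]
  | H_iii => [([ga;gb;ga], [gb;ga;gb]);
              ([gb;gc;gb;ga], [gc;gb;ga;gc]);
              ([gc;gb;ga], [ga;gc;gb])]
  end.

(* Main.v *)
Require Import Defs.
From Stdlib Require Import List Arith Lia ZArith Bool.
Import ListNotations.

Lemma pos_app (u v : list gen) : pos (u ++ v) = pos u ++ pos v.
Proof. unfold pos; apply map_app. Qed.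

Lemma geq_app R u u' v v' : geq R u u' -> geq R v v' -> geq R (u++v) (u'++v').
Proof.
  intros H1 H2. apply geq_trans with (u'++v).
  - pose proof (geq_ctx R [] v u u' H1) as H. simpl in H. exact H.
  - pose proof (geq_ctx R u' [] v v' H2) as H. rewrite !app_nil_r in H. exact H.
Qed.

Lemma cancel_l1 R x u v : geq R ((x,true) :: u) ((x,true) :: v) -> geq R u v.
Proof.
  intros H.
  assert (I : forall w, geq R ((x,false)::(x,true)::w) w).
  { intro w. pose proof (geq_ctx R [] w _ _ (geq_inv1 R x false)) as H0.
    simpl in H0. exact H0. }
  pose proof (geq_ctx R [(x,false)] [] _ _ H) as H1. rewrite !app_nil_r in H1.
  simpl in H1.
  apply geq_trans with ((x,false)::(x,true)::u). apply geq_sym, I.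
  apply geq_trans with ((x,false)::(x,true)::v). exact H1. apply I.
Qed.

Lemma cancel_r1 R x u v : geq R (u ++ [(x,true)]) (v ++ [(x,true)]) -> geq R u v.
Proof.
  intros H.
  assert (I : forall w, geq R (w ++ [(x,true);(x,false)]) w).
  { intro w. pose proof (geq_ctx R w [] _ _ (geq_inv1 R x true)) as H0.
    simpl in H0. rewrite !app_nil_r in H0. exact H0. }
  pose proof (geq_ctx R [] [(x,false)] _ _ H) as H1. simpl in H1.
  rewrite <- !app_assoc in H1. simpl in H1.
  apply geq_trans with (u ++ [(x,true);(x,false)]). apply geq_sym, I.
  apply geq_trans with (v ++ [(x,true);(x,false)]). exact H1. apply I.
Qed.

Lemma cancel_l R p u v : geq R (pos p ++ u) (pos p ++ v) -> geq R u v.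
Proof.
  induction p as [|x p IH]; simpl; intro H; auto.
  apply IH. apply (cancel_l1 R x). exact H.
Qed.

Lemma cancel_r R q u v : geq R (u ++ pos q) (v ++ pos q) -> geq R u v.
Proof.
  revert u v. induction q as [|x q IH]; simpl; intros u v H.
  - rewrite !app_nil_r in H. exact H.
  - apply (cancel_r1 R x). apply IH.
    rewrite <- !app_assoc. exact H.
Qed.

Fixpoint slen (w : gword) : Z :=
  match w with [] => 0%Z | (_, true) :: w' => (1 + slen w')%Z | (_, false) :: w' => (slen w' - 1)%Z end.

Lemma slen_app u v : slen (u ++ v) = (slen u + slen v)%Z.
Proof. induction u as [|[g [|]] u IH]; cbn [slen app]; rewrite ?IH; lia. Qed.

Lemma slen_pos w : slen (pos w) = Z.of_nat (length w).
Proof. induction w; cbn [slen pos map]; [reflexivity| fold (pos w); rewrite IHw; cbn [length]; lia]. Qed.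

Definition homog (R : list (list gen * list gen)) : bool :=
  forallb (fun uv => Nat.eqb (length (fst uv)) (length (snd uv))) R.

Lemma slen_sound R u v : homog R = true -> geq R u v -> slen u = slen v.
Proof.
  intros Hh H. induction H.
  - unfold homog in Hh. rewrite forallb_forall in Hh. specialize (Hh _ H).
    simpl in Hh. apply Nat.eqb_eq in Hh. rewrite !slen_pos, Hh. reflexivity.
  - destruct b; cbn [slen negb]; lia.
  - rewrite !slen_app, IHgeq. reflexivity.
  - reflexivity.
  - auto.
  - congruence.
Qed.

Lemma len_sound R u v : homog R = true -> geq R (pos u) (pos v) -> length u = length v.
Proof. intros Hh H. apply (slen_sound R) in H; auto. rewrite !slen_pos in H. lia. Qed.

Definition gen_dec : forall x y : gen, {x=y}+{x<>y}. decide equality. Defined.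
Definition lgb (l1 l2 : list gen) : bool := if list_eq_dec gen_dec l1 l2 then true else false.
Lemma lgb_true l1 l2 : lgb l1 l2 = true -> l1 = l2.
Proof. unfold lgb. destruct (list_eq_dec gen_dec l1 l2); congruence. Qed.

Definition one_at (u v w1 w2 : list gen) (i : nat) : bool :=
  lgb (firstn (length u) (skipn i w1)) u &&
  lgb w2 (firstn i w1 ++ v ++ skipn (length u) (skipn i w1)).

Lemma one_at_sound R u v w1 w2 i : (In (u,v) R \/ In (v,u) R) ->
  one_at u v w1 w2 i = true -> geq R (pos w1) (pos w2).
Proof.
  intros Hin H. unfold one_at in H. apply andb_true_iff in H as [H1 H2].
  apply lgb_true in H1. apply lgb_true in H2.
  assert (E : w1 = firstn i w1 ++ u ++ skipn (length u) (skipn i w1)).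
  { transitivity (firstn i w1 ++ skipn i w1); [symmetry; apply firstn_skipn|].
    f_equal. rewrite <- (firstn_skipn (length u) (skipn i w1)) at 1. rewrite H1. reflexivity. }
  rewrite E, H2, !pos_app.
  apply geq_ctx. destruct Hin as [Hin|Hin].
  - apply geq_rel; exact Hin.
  - apply geq_sym, geq_rel; exact Hin.
Qed.

Definition rel_step R (w1 w2 : list gen) : bool :=
  existsb (fun i => existsb (fun uv => one_at (fst uv) (snd uv) w1 w2 i || one_at (snd uv) (fst uv) w1 w2 i) R)
    (seq 0 (S (length w1))).

Lemma rel_step_sound R w1 w2 : rel_step R w1 w2 = true -> geq R (pos w1) (pos w2).
Proof.
  unfold rel_step. intro H. apply existsb_exists in H as [i [_ H]].
  apply existsb_exists in H as [[u v] [Hin H]]. simpl in H.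
  apply orb_true_iff in H as [H|H]; [apply (one_at_sound R u v _ _ i); auto | apply (one_at_sound R v u _ _ i); auto].
Qed.

Fixpoint chain R (w1 : list gen) (ws : list (list gen)) : bool :=
  match ws with [] => true | w2 :: ws' => rel_step R w1 w2 && chain R w2 ws' end.

Lemma last_indep {A} (a : A) l d d' : last (a :: l) d = last (a :: l) d'.
Proof. revert a. induction l as [|b l IH]; intro a; [reflexivity|]. simpl. apply IH. Qed.

Lemma chain_sound R w1 ws : chain R w1 ws = true -> geq R (pos w1) (pos (last ws w1)).
Proof.
  revert w1. induction ws as [|w2 ws IH]; simpl; intros w1 H.
  - apply geq_refl.
  - apply andb_true_iff in H as [H1 H2].
    apply geq_trans with (pos w2). apply rel_step_sound; auto.
    specialize (IH _ H2). destruct ws as [|w3 ws]; [exact IH|].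
    rewrite (last_indep w3 ws w2 w1) in IH. exact IH.
Qed.

Definition lact (t it : gen -> list nat) (l : letter) (x : nat) : nat :=
  nth x (if snd l then t (fst l) else it (fst l)) x.
Definition act t it (w : gword) (x : nat) : nat := fold_left (fun y l => lact t it l y) w x.

Lemma act_app t it u v x : act t it (u ++ v) x = act t it v (act t it u x).
Proof. unfold act. rewrite fold_left_app. reflexivity. Qed.

Definition small (t it : gen -> list nat) N : bool :=
  forallb (fun g => (length (t g) <=? N) && (length (it g) <=? N)) [ga;gb;gc].

Lemma act_big t it N w x : small t it N = true -> N <= x -> act t it w x = x.
Proof.
  intros Hs Hx. unfold act. induction w as [|l w IH] using rev_ind; [reflexivity|].
  rewrite fold_left_app. simpl. rewrite IH. unfold lact.
  apply nth_overflow. unfold small in Hs. rewrite forallb_forall in Hs.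
  destruct l as [g s]. assert (In g [ga;gb;gc]) as Hg by (destruct g; simpl; auto).
  specialize (Hs g Hg). apply andb_true_iff in Hs as [H1 H2].
  apply Nat.leb_le in H1. apply Nat.leb_le in H2. destruct s; simpl; lia.
Qed.

Definition agree t it N u v : bool := forallb (fun x => act t it u x =? act t it v x) (seq 0 N).

Lemma agree_all t it N u v : small t it N = true -> agree t it N u v = true ->
  forall x, act t it u x = act t it v x.
Proof.
  intros Hs Ha x. destruct (Nat.lt_ge_cases x N) as [Hx|Hx].
  - unfold agree in Ha. rewrite forallb_forall in Ha. apply Nat.eqb_eq, Ha.
    apply in_seq. lia.
  - rewrite !(act_big t it N); auto.
Qed.

Definition goodb t it N (R : list (list gen * list gen)) : bool :=
  small t it N &&
  forallb (fun uv => agree t it N (pos (fst uv)) (pos (snd uv))) R &&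
  forallb (fun g => agree t it N [(g,true);(g,false)] [] && agree t it N [(g,false);(g,true)] []) [ga;gb;gc].

Lemma rep_sound t it N R u v : goodb t it N R = true -> geq R u v ->
  forall x, act t it u x = act t it v x.
Proof.
  intros Hg H. unfold goodb in Hg. apply andb_true_iff in Hg as [Hg H3].
  apply andb_true_iff in Hg as [Hs H2].
  induction H; intro x.
  - rewrite forallb_forall in H2. apply (agree_all t it N); auto. apply (H2 _ H).
  - rewrite forallb_forall in H3. assert (In g [ga;gb;gc]) as Hgg by (destruct g; simpl; auto).
    specialize (H3 g Hgg). apply andb_true_iff in H3 as [H3a H3b].
    destruct b; simpl negb; apply (agree_all t it N); auto.
  - rewrite !act_app. rewrite IHgeq. reflexivity.
  - reflexivity.
  - symmetry; auto.
  - rewrite IHgeq1; auto.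
Qed.

Definition sg t it N (w : gword) : list nat := map (act t it w) (seq 0 N).
Definition nlb (l1 l2 : list nat) : bool := if list_eq_dec Nat.eq_dec l1 l2 then true else false.

Lemma sg_sound t it N R u v : goodb t it N R = true -> geq R u v -> nlb (sg t it N u) (sg t it N v) = true.
Proof.
  intros Hg H. unfold nlb, sg. destruct (list_eq_dec Nat.eq_dec _ _) as [|n]; auto.
  exfalso; apply n. apply map_ext. apply (rep_sound t it N R); auto.
Qed.

Fixpoint words (k : nat) : list (list gen) :=
  match k with 0 => [[]] | S k => flat_map (fun w => [ga::w; gb::w; gc::w]) (words k) end.

Lemma words_complete w : In w (words (length w)).
Proof.
  induction w as [|g w IH]; simpl; [auto|].
  apply in_flat_map. exists w. split; auto. destruct g; simpl; auto.
Qed.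

Definition checkR t it N (U V P Q : list gen) (ns : list nat) : bool :=
  forallb (fun n => forallb (fun w1 =>
    negb (existsb (fun w2 => nlb (sg t it N (pos (V ++ w2))) (sg t it N (pos (U ++ w1)))) (words (n - length V))
      && existsb (fun w3 => nlb (sg t it N (pos (U ++ w1 ++ w3))) (sg t it N (pos P))) (words (length P - n))
      && existsb (fun w4 => nlb (sg t it N (pos (U ++ w1 ++ w4))) (sg t it N (pos Q))) (words (length Q - n))))
    (words (n - length U))) ns.

Definition checkL t it N (U V P Q : list gen) (ns : list nat) : bool :=
  forallb (fun n => forallb (fun w1 =>
    negb (existsb (fun w2 => nlb (sg t it N (pos (w2 ++ V))) (sg t it N (pos (w1 ++ U)))) (words (n - length V))
      && existsb (fun w3 => nlb (sg t it N (pos (w3 ++ w1 ++ U))) (sg t it N (pos P))) (words (length P - n))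
      && existsb (fun w4 => nlb (sg t it N (pos (w4 ++ w1 ++ U))) (sg t it N (pos Q))) (words (length Q - n))))
    (words (n - length U))) ns.

Lemma in_words w k : length w = k -> In w (words k).
Proof. intros <-; apply words_complete. Qed.

Lemma noLcmR R t it N U V P Q :
  goodb t it N R = true -> homog R = true ->
  checkR t it N U V P Q (seq 0 (S (length P))) = true ->
  (exists W, geq R (pos P) (pos (U ++ W))) -> (exists W, geq R (pos P) (pos (V ++ W))) ->
  (exists W, geq R (pos Q) (pos (U ++ W))) -> (exists W, geq R (pos Q) (pos (V ++ W))) ->
  ~ (exists L, is_lcm (list gen)
                 (ldiv (list gen) (Gplus_eqv R) Gplus_mul) U V L).
Proof.
  intros Hg Hh Hc HPU HPV HQU HQV [L [[W1 H1] [[W2 H2] Hmin]]].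
  unfold Gplus_eqv, Gplus_mul in *.
  destruct (Hmin P HPU HPV) as [W3 H3]. destruct (Hmin Q HQU HQV) as [W4 H4].
  unfold Gplus_eqv, Gplus_mul in *.
  pose proof (len_sound R _ _ Hh H1) as L1. pose proof (len_sound R _ _ Hh H2) as L2.
  pose proof (len_sound R _ _ Hh H3) as L3. pose proof (len_sound R _ _ Hh H4) as L4.
  rewrite !length_app in L1, L2, L3, L4.
  unfold checkR in Hc. rewrite forallb_forall in Hc.
  specialize (Hc (length L) ltac:(apply in_seq; lia)).
  rewrite forallb_forall in Hc.
  specialize (Hc W1 ltac:(apply in_words; lia)).
  apply negb_true_iff in Hc. apply diff_true_false. rewrite <- Hc. symmetry.
  apply andb_true_iff; split; [apply andb_true_iff; split|]; apply existsb_exists.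
  - exists W2. split; [apply in_words; lia|]. apply (sg_sound t it N R).
    auto. apply geq_trans with (pos L); [apply geq_sym|]; auto.
  - exists W3. split; [apply in_words; lia|]. apply (sg_sound t it N R); auto.
    apply geq_sym. apply geq_trans with (pos (L ++ W3)); auto.
    rewrite !pos_app, app_assoc. apply geq_app; [|apply geq_refl]. rewrite <- pos_app. auto.
  - exists W4. split; [apply in_words; lia|]. apply (sg_sound t it N R); auto.
    apply geq_sym. apply geq_trans with (pos (L ++ W4)); auto.
    rewrite !pos_app, app_assoc. apply geq_app; [|apply geq_refl]. rewrite <- pos_app. auto.
Qed.

Lemma noLcmL R t it N U V P Q :
  goodb t it N R = true -> homog R = true ->
  checkL t it N U V P Q (seq 0 (S (length P))) = true ->
  (exists W, geq R (pos P) (pos (W ++ U))) -> (exists W, geq R (pos P) (pos (W ++ V))) ->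
  (exists W, geq R (pos Q) (pos (W ++ U))) -> (exists W, geq R (pos Q) (pos (W ++ V))) ->
  ~ (exists L, is_lcm (list gen)
                 (rdiv (list gen) (Gplus_eqv R) Gplus_mul) U V L).
Proof.
  intros Hg Hh Hc HPU HPV HQU HQV [L [[W1 H1] [[W2 H2] Hmin]]].
  unfold Gplus_eqv, Gplus_mul in *.
  destruct (Hmin P HPU HPV) as [W3 H3]. destruct (Hmin Q HQU HQV) as [W4 H4].
  unfold Gplus_eqv, Gplus_mul in *.
  pose proof (len_sound R _ _ Hh H1) as L1. pose proof (len_sound R _ _ Hh H2) as L2.
  pose proof (len_sound R _ _ Hh H3) as L3. pose proof (len_sound R _ _ Hh H4) as L4.
  rewrite !length_app in L1, L2, L3, L4.
  unfold checkL in Hc. rewrite forallb_forall in Hc.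
  specialize (Hc (length L) ltac:(apply in_seq; lia)).
  rewrite forallb_forall in Hc.
  specialize (Hc W1 ltac:(apply in_words; lia)).
  apply negb_true_iff in Hc. apply diff_true_false. rewrite <- Hc. symmetry.
  apply andb_true_iff; split; [apply andb_true_iff; split|]; apply existsb_exists.
  - exists W2. split; [apply in_words; lia|]. apply (sg_sound t it N R).
    auto. apply geq_trans with (pos L); [apply geq_sym|]; auto.
  - exists W3. split; [apply in_words; lia|]. apply (sg_sound t it N R); auto.
    apply geq_sym. apply geq_trans with (pos (W3 ++ L)); auto.
    rewrite !pos_app. apply geq_app; [apply geq_refl|]. rewrite <- pos_app. auto.
  - exists W4. split; [apply in_words; lia|]. apply (sg_sound t it N R); auto.
    apply geq_sym. apply geq_trans with (pos (W4 ++ L)); auto.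
    rewrite !pos_app. apply geq_app; [apply geq_refl|]. rewrite <- pos_app. auto.
Qed.
Definition t_Bii (g : gen) : list nat := match g with ga => [1; 0; 3; 2; 5; 4; 7; 6; 10; 11; 8; 9; 14; 15; 12; 13; 20; 21; 22; 23; 16; 17; 18; 19] | gb => [9; 8; 11; 10; 13; 12; 15; 14; 18; 19; 16; 17; 22; 23; 20; 21; 4; 5; 6; 7; 0; 1; 2; 3] | gc => [4; 5; 6; 7; 0; 1; 2; 3; 9; 8; 11; 10; 13; 12; 15; 14; 18; 19; 16; 17; 22; 23; 20; 21] end.
Definition i_Bii (g : gen) : list nat := match g with ga => [1; 0; 3; 2; 5; 4; 7; 6; 10; 11; 8; 9; 14; 15; 12; 13; 20; 21; 22; 23; 16; 17; 18; 19] | gb => [20; 21; 22; 23; 16; 17; 18; 19; 1; 0; 3; 2; 5; 4; 7; 6; 10; 11; 8; 9; 14; 15; 12; 13] | gc => [4; 5; 6; 7; 0; 1; 2; 3; 9; 8; 11; 10; 13; 12; 15; 14; 18; 19; 16; 17; 22; 23; 20; 21] end.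
Definition t_Bvi (g : gen) : list nat := match g with ga => [1; 2; 3; 4; 0] | gb => [2; 0; 4; 1; 3] | gc => [1; 4; 3; 0; 2] end.
Definition i_Bvi (g : gen) : list nat := match g with ga => [4; 0; 1; 2; 3] | gb => [1; 3; 0; 4; 2] | gc => [3; 0; 4; 2; 1] end.
Definition t_Hii (g : gen) : list nat := match g with ga => [0; 1; 3; 4; 2] | gb => [0; 2; 3; 1; 4] | gc => [1; 2; 0; 3; 4] end.
Definition i_Hii (g : gen) : list nat := match g with ga => [0; 1; 4; 2; 3] | gb => [0; 3; 1; 2; 4] | gc => [2; 0; 1; 3; 4] end.
Definition t_Hiii (g : gen) : list nat := match g with ga => [1; 2; 3; 4; 0] | gb => [2; 0; 4; 1; 3] | gc => [3; 0; 4; 2; 1] end.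
Definition i_Hiii (g : gen) : list nat := match g with ga => [4; 0; 1; 2; 3] | gb => [1; 3; 0; 4; 2] | gc => [1; 4; 3; 0; 2] end.

Lemma bii_cbb : geq (rels B_ii) (pos [gc;gb;gb]) (pos [gb;gb;ga]).
Proof.
  pose proof (chain_sound (rels B_ii) [gb;ga;gc;gb;gb;gc]
    [[gb;ga;gc;gb;ga;gb]; [gb;gc;ga;gb;ga;gb]; [ga;gb;ga;gb;ga;gb]; [gb;ga;gb;ga;gb;ga];
     [gb;ga;gb;gb;gc;ga]; [gb;ga;gb;gb;ga;gc]] eq_refl) as H.
  change (geq (rels B_ii) (pos [gb;ga] ++ (pos [gc;gb;gb] ++ pos [gc]))
                          (pos [gb;ga] ++ (pos [gb;gb;ga] ++ pos [gc]))) in H.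
  apply cancel_l in H. apply (cancel_r _ [gc]). exact H.
Qed.

Lemma bii_cabb : geq (rels B_ii) (pos [gc;ga;gb;gb]) (pos [gb;gc;gb;ga]).
Proof.
  apply geq_trans with (pos [ga;gc;gb;gb]).
  { exact (chain_sound (rels B_ii) [gc;ga;gb;gb] [[ga;gc;gb;gb]] eq_refl). }
  apply geq_trans with (pos [ga;gb;gb;ga]).
  { change (geq (rels B_ii) (pos [ga] ++ pos [gc;gb;gb]) (pos [ga] ++ pos [gb;gb;ga])).
    apply geq_app; [apply geq_refl| exact bii_cbb]. }
  exact (chain_sound (rels B_ii) [ga;gb;gb;ga] [[gb;gc;gb;ga]] eq_refl).
Qed.

Theorem corollary5p1 : forall X : case, ~ Gplus_gaussian (rels X).
Proof.
  intros X [_ [_ [Hl Hr]]]. destruct X.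
  - apply (noLcmR (rels B_ii) t_Bii i_Bii 24 [gb] [gc] [gc;gb;gb] [gc;ga;gb;gb]);
      [vm_compute; reflexivity | vm_compute; reflexivity | vm_compute; reflexivity | | | | | exact (Hl _ _)].
    + exists [gb;ga]. apply bii_cbb.
    + exists [gb;gb]. apply geq_refl.
    + exists [gc;gb;ga]. apply bii_cabb.
    + exists [ga;gb;gb]. apply geq_refl.
  - apply (noLcmR (rels B_vi) t_Bvi i_Bvi 5 [ga] [gb] [ga;gb;ga] [ga;gc;ga]);
      [vm_compute; reflexivity | vm_compute; reflexivity | vm_compute; reflexivity | | | | | exact (Hl _ _)].
    + exists [gb;ga]. apply geq_refl.
    + exists [ga;gb]. exact (chain_sound (rels B_vi) [ga;gb;ga] [[gb;ga;gb]] eq_refl).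
    + exists [gc;ga]. apply geq_refl.
    + exists [ga;gc]. exact (chain_sound (rels B_vi) [ga;gc;ga] [[gb;ga;gc]] eq_refl).
  - apply (noLcmR (rels H_ii) t_Hii i_Hii 5 [ga] [gb] [ga;gc;ga] [ga;gb;ga;gb]);
      [vm_compute; reflexivity | vm_compute; reflexivity | vm_compute; reflexivity | | | | | exact (Hl _ _)].
    + exists [gc;ga]. apply geq_refl.
    + exists [ga;gc]. exact (chain_sound (rels H_ii) [ga;gc;ga] [[gb;ga;gc]] eq_refl).
    + exists [gb;ga;gb]. apply geq_refl.
    + exists [ga;gb;ga]. exact (chain_sound (rels H_ii) [ga;gb;ga;gb] [[gb;ga;gb;ga]] eq_refl).
  - apply (noLcmL (rels H_iii) t_Hiii i_Hiii 5 [ga] [gb] [ga;gb;ga] [ga;gc;gb]);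
      [vm_compute; reflexivity | vm_compute; reflexivity | vm_compute; reflexivity | | | | | exact (Hr _ _)].
    + exists [ga;gb]. apply geq_refl.
    + exists [gb;ga]. exact (chain_sound (rels H_iii) [ga;gb;ga] [[gb;ga;gb]] eq_refl).
    + exists [gc;gb]. exact (chain_sound (rels H_iii) [ga;gc;gb] [[gc;gb;ga]] eq_refl).
    + exists [ga;gc]. apply geq_refl.
Qed.
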